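(* Let $G_1$ and $G_2$ be simple graphs with $|V(G_1)|=n$. Let $\alpha'(G_1)$ be the size of a maximum matching $M$ of $G_1$ and $l=n-2\alpha'(G_1)$ the number of $M$-unsaturated vertices of $G_1$. Then $n\,s(G_2)\le s(G_1\circ G_2)\le n\,s(G_2)+\alpha'(G_1)+l.$
   Context: A matching in a graph is a set of edges no two of which share a vertex; it is maximal if it is not properly contained in another matching, and maximum if it has the largest possible size. A vertex is $M$-unsaturated if no edge of $M$ is incident to it. The saturation number $s(G)$ is the minimum cardinality of a maximal matching of $G$. The corona $G_1\circ G_2$ is obtained by taking one copy of $G_1$ and $|V(G_1)|$ disjoint copies of $G_2$, and joining the $i$-th vertex of $G_1$ by an edge to every vertex of the $i$-th copy of $G_2$. *)

(* Defs.v *)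
From mathcomp Require Import all_boot.
Set Implicit Arguments. Unset Strict Implicit. Unset Printing Implicit Defensive.

Section Graphs.
Variable V : finType.

Definition simple_graph (e : rel V) : Prop := symmetric e /\ irreflexive e.

Definition is_edge (e : rel V) (A : {set V}) : bool :=
  [exists x, exists y, e x y && (A == [set x; y])].

Definition matching (e : rel V) (M : {set {set V}}) : bool :=
  [forall A in M, is_edge e A] &&
  [forall A in M, forall B in M, (A != B) ==> [disjoint A & B]].

Definition maximal_matching (e : rel V) (M : {set {set V}}) : bool :=
  matching e M && [forall M' : {set {set V}}, (M \proper M') ==> ~~ matching e M'].

Definition matching_number (e : rel V) : nat :=
  \max_(M : {set {set V}} | matching e M) #|M|.

(* saturation number s(G): minimum size of a maximal matching.
   (A maximal matching always exists and has size <= #|V|, so the default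
   value #|V| of the iterated minimum is never the answer unless attained.) *)
Definition saturation_number (e : rel V) : nat :=
  \big[minn/#|V|]_(M : {set {set V}} | maximal_matching e M) #|M|.

End Graphs.

(* corona G1 o G2: vertices are V1 (the copy of G1) plus, for each vertex a of
   G1, a copy {a} x V2 of G2; a is joined to every vertex of its copy. *)
Definition corona (V1 V2 : finType) (e1 : rel V1) (e2 : rel V2)
  : rel (V1 + (V1 * V2))%type :=
  fun u v =>
    match u, v with
    | inl a, inl b => e1 a b
    | inr (a, x), inr (b, y) => (a == b) && e2 x y
    | inl a, inr (b, _) => a == b
    | inr (a, _), inl b => a == b
    end.

(* Main.v *)
Require Import Defs.
From mathcomp Require Import all_boot.
Set Implicit Arguments. Unset Strict Implicit. Unset Printing Implicit Defensive.

Section Gen.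
Variable V : finType.
Variable e : rel V.
Hypothesis He : simple_graph e.
Implicit Types (M N : {set {set V}}) (A B : {set V}).

Definition sat (M : {set {set V}}) v := [exists A in M, v \in A].

Lemma satP M v : reflect (exists2 A, A \in M & v \in A) (sat M v).
Proof. by apply: (iffP exists_inP). Qed.

Lemma is_edgeP A : reflect (exists x y, e x y /\ A = [set x; y]) (is_edge e A).
Proof.
apply: (iffP existsP) => [[x /existsP [y /andP [exy /eqP ->]]]|[x [y [exy ->]]]].
  by exists x, y.
by exists x; apply/existsP; exists y; rewrite exy eqxx.
Qed.

Lemma edge_neq x y : e x y -> x != y.
Proof. by move=> exy; apply: contraTneq exy => ->; rewrite (proj2 He). Qed.

Lemma matchingP M : reflect ((forall A, A \in M -> is_edge e A) /\
   (forall A B v, A \in M -> B \in M -> v \in A -> v \in B -> A = B)) (matching e M).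
Proof.
apply: (iffP andP) => [[/forall_inP H1 /forall_inP H2]|[H1 H2]]; split.
- exact H1.
- move=> A B v HA HB vA vB; apply/eqP; apply/negPn/negP => nAB.
  move: (H2 A HA) => /forall_inP /(_ B HB) /implyP /(_ nAB) dis.
  by rewrite (disjointFr dis vA) in vB.
- by apply/forall_inP.
- apply/forall_inP => A HA; apply/forall_inP => B HB; apply/implyP => nAB.
  apply/pred0P => v /=; apply/negbTE/negP => /andP [vA vB].
  by move/eqP: nAB; apply; apply: (H2 A B v).
Qed.

Lemma add_edge M x y : matching e M -> e x y -> ~~ sat M x -> ~~ sat M y ->
  matching e ([set x; y] |: M) /\ [set x; y] \notin M.
Proof.
move=> /matchingP [H1 H2] exy nx ny; split; last first.
  by apply: contra nx => HM; apply/satP; exists [set x; y]; rewrite // !inE eqxx.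
apply/matchingP; split.
  move=> A; rewrite in_setU1 => /orP [/eqP ->|]; last exact: H1.
  by apply/is_edgeP; exists x, y.
have key : forall B v, B \in M -> v \in [set x; y] -> v \in B -> False.
  move=> B v BM; rewrite !inE => /orP [] /eqP -> vB.
    by move/negP: nx; apply; apply/satP; exists B.
  by move/negP: ny; apply; apply/satP; exists B.
move=> A B v; rewrite !in_setU1 => /orP [/eqP ->|AM] /orP [/eqP ->|BM] vA vB //.
- by case: (key B v BM).
- by case: (key A v AM).
- exact: H2 vA vB.
Qed.

Lemma maximalP M : matching e M -> (forall x y, e x y -> sat M x || sat M y) ->
  maximal_matching e M.
Proof.
move=> HM Hs; rewrite /maximal_matching HM /=; apply/forallP => M'.
apply/implyP => /properP [sub [A AM' AnM]].
apply/negP => /matchingP [H1 H2].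
case/is_edgeP: (H1 A AM') => x [y [exy EA]].
have hx : x \in A by rewrite EA !inE eqxx.
have hy : y \in A by rewrite EA !inE eqxx orbT.
case/orP: (Hs x y exy) => /satP [B BM vB].
  by move: (H2 A B x AM' (subsetP sub B BM) hx vB) => AB; rewrite AB BM in AnM.
by move: (H2 A B y AM' (subsetP sub B BM) hy vB) => AB; rewrite AB BM in AnM.
Qed.

Lemma maximal_sat M x y : maximal_matching e M -> e x y -> sat M x || sat M y.
Proof.
case/andP=> HM /forallP Hmax exy; apply/negPn/negP; rewrite negb_or => /andP [nx ny].
case: (add_edge HM exy nx ny) => HM' nin.
have pr : M \proper [set x; y] |: M.
  by apply: properUr; apply: contra nin; rewrite sub1set.
by move/implyP: (Hmax ([set x; y] |: M)) => /(_ pr); rewrite HM'.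
Qed.

Lemma sat_sub M M' v : M \subset M' -> sat M v -> sat M' v.
Proof. by move=> sub /satP [A AM vA]; apply/satP; exists A => //; apply: (subsetP sub). Qed.

Lemma edge_card A : is_edge e A -> #|A| = 2.
Proof. by case/is_edgeP => x [y [exy ->]]; rewrite cards2 edge_neq. Qed.

Lemma matching_cover M : matching e M -> #|cover M| = 2 * #|M|.
Proof.
move=> HM; have /matchingP [H1 H2] := HM.
have triv : trivIset M.
  apply/trivIsetP => A B AM BM nAB; apply/pred0P => v /=; apply/negbTE/negP => /andP [vA vB].
  by move/eqP: nAB; apply; apply: (H2 A B v).
rewrite -(eqP triv) (eq_bigr (fun _ => 2)); first by rewrite sum_nat_const mulnC.
by move=> A AM; apply: edge_card; apply: H1.
Qed.

Lemma sat_cover M v : sat M v = (v \in cover M).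
Proof. by apply/satP/bigcupP => [[A ? ?]|[A ? ?]]; exists A. Qed.

Lemma matching_card M : matching e M -> #|M| <= #|V|.
Proof.
move=> HM; apply: (leq_trans _ (max_card (mem (cover M)))).
by rewrite matching_cover // leq_pmull.
Qed.

Lemma matching0 : matching e set0.
Proof. by apply/matchingP; split => A //; rewrite inE. Qed.

Lemma max_le M : matching e M -> #|M| <= matching_number e.
Proof. by move=> HM; apply: (@leq_bigmax_cond _ (fun M => matching e M)). Qed.

Lemma max_attained : exists2 M, matching e M & #|M| = matching_number e.
Proof.
have pos : 0 < #|[pred M : {set {set V}} | matching e M]|.
  by apply/card_gt0P; exists set0; rewrite inE matching0.
case: (eq_bigmax_cond (fun M => #|M|) pos) => M0 HM0 Heq.
by exists M0 => //; rewrite /matching_number Heq.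
Qed.

Lemma maximum_maximal M : matching e M -> #|M| = matching_number e -> maximal_matching e M.
Proof.
move=> HM Hc; rewrite /maximal_matching HM; apply/forallP => M'; apply/implyP => pr.
apply/negP => HM'; have := max_le HM'; rewrite -Hc.
by move: (proper_card pr); case: leqP.
Qed.

Lemma maximal_exists : exists M, maximal_matching e M.
Proof. by case: max_attained => M HM Hc; exists M; apply: maximum_maximal. Qed.

Lemma bigmin_le_seq (I : eqType) (s : seq I) (P : pred I) (F : I -> nat) j d :
  j \in s -> P j -> \big[minn/d]_(i <- s | P i) F i <= F j.
Proof.
elim: s => // x s IH; rewrite inE big_cons => /orP [/eqP ->|js] Pj.
  by rewrite Pj geq_minl.
case: (P x); last exact: IH.
by rewrite (leq_trans (geq_minr _ _)) //; apply: IH.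
Qed.

Lemma sat_le M : maximal_matching e M -> saturation_number e <= #|M|.
Proof. by move=> HM; apply: bigmin_le_seq => //; rewrite mem_index_enum. Qed.

Lemma sat_attained : exists2 M, maximal_matching e M & #|M| = saturation_number e.
Proof.
have : (exists2 M, maximal_matching e M & #|M| = saturation_number e)
       \/ saturation_number e = #|V|.
  rewrite /saturation_number; elim/big_ind: _ => [|x y Hx Hy|M HM]; [by right| |by left; exists M].
  by case: (leqP x y).
case => // Hs; case: maximal_exists => M HM; exists M => //.
apply/eqP; rewrite eqn_leq sat_le // Hs andbT; apply: matching_card.
by case/andP: HM.
Qed.

Lemma extend_one (K : {set {set V}}) x0 : matching e K ->
  (forall u v, e u v -> u != x0 -> v != x0 -> sat K u || sat K v) ->
  exists2 N, maximal_matching e N & #|N| <= #|K| + 1.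
Proof.
move=> HN Hc.
case: (boolP [exists y, e x0 y && ~~ sat K x0 && ~~ sat K y]).
  case/existsP => y /andP [/andP [exy nx] ny].
  case: (add_edge HN exy nx ny) => HN' nin.
  exists ([set x0; y] |: K); last by rewrite cardsU1 nin addnC.
  apply: maximalP => // u v euv.
  have sub : K \subset [set x0; y] |: K by apply: subsetUr.
  have s0 : sat ([set x0; y] |: K) x0.
    by apply/satP; exists [set x0; y]; rewrite ?in_setU1 ?eqxx // !inE eqxx.
  case: (eqVneq u x0) => [->|ux]; first by rewrite s0.
  case: (eqVneq v x0) => [->|vx]; first by rewrite s0 orbT.
  by case/orP: (Hc u v euv ux vx) => /(sat_sub sub) ->; rewrite ?orbT.
move=> Hn; exists K; last by rewrite leq_addr.
apply: maximalP => // u v euv.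
have H' : forall w, e x0 w -> sat K x0 || sat K w.
  move=> w ew; apply/orP; case: (boolP (sat K x0)) => nx; [by left|right].
  case: (boolP (sat K w)) => // nw.
  by move/negP: Hn; case; apply/existsP; exists w; rewrite ew nx nw.
case: (eqVneq u x0) => [eu|ux]; first by rewrite eu; apply: H'; rewrite -eu.
case: (eqVneq v x0) => [ev|vx]; last exact: Hc.
by rewrite orbC ev; apply: H'; rewrite -ev (proj1 He).
Qed.

End Gen.

Section Cor.
Variables (V1 V2 : finType) (e1 : rel V1) (e2 : rel V2).
Hypotheses (H1 : simple_graph e1) (H2 : simple_graph e2).
Local Notation W := (V1 + V1 * V2)%type.
Local Notation ec := (corona e1 e2).

Lemma corona_simple : simple_graph ec.
Proof.
split.
  case=> [a|[a x]] [b|[b y]] /=; first exact: (proj1 H1).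
  - exact: eq_sym.
  - exact: eq_sym.
  - by rewrite eq_sym (proj1 H2).
by case=> [a|[a x]] /=; [exact: (proj2 H1)|rewrite (proj2 H2) andbF].
Qed.

Definition fa (a : V1) (x : V2) : W := inr (a, x).
Definition il (u : V1) : W := inl u.

Lemma fa_inj a : injective (fa a). Proof. by move=> x y []. Qed.
Lemma il_inj : injective il. Proof. by move=> x y []. Qed.

Lemma imset_2 (T U : finType) (f : T -> U) x y : f @: [set x; y] = [set f x; f y].
Proof. by rewrite imsetU1 imset_set1. Qed.

Lemma mem_il w (A : {set V1}) : (il w \in il @: A) = (w \in A).
Proof. by rewrite mem_imset //; exact: il_inj. Qed.
Lemma mem_fa a x b (B : {set V2}) : (fa a x \in fa b @: B) = (a == b) && (x \in B).
Proof.
apply/imsetP/andP => [[y yB [-> ->]]|[/eqP -> xB]]; [by rewrite eqxx | by exists x].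
Qed.
Lemma il_fa w b (B : {set V2}) : (il w \in fa b @: B) = false.
Proof. by apply/imsetP => [[y _ ]]. Qed.
Lemma fa_il a x (A : {set V1}) : (fa a x \in il @: A) = false.
Proof. by apply/imsetP => [[y _ ]]. Qed.


Lemma upper : saturation_number ec <=
  #|V1| * saturation_number e2 + matching_number e1 + (#|V1| - 2 * matching_number e1).
Proof.
case: (max_attained e1) => M1 HM1 cM1.
have HM1max := maximum_maximal HM1 cM1.
case: (sat_attained H2) => M2 HM2 cM2.
have /matchingP [E1 U1] := HM1.
have /andP [/matchingP [E2 U2] _] := HM2.
pose U := [set u | ~~ sat M1 u].
pose X0 := [set x | [pick y | ~~ sat M2 y] == Some x].
have hX0 : forall x, x \in X0 -> ~~ sat M2 x.
  by move=> x; rewrite inE; case: (pickP (fun y => ~~ sat M2 y)) => [y Hy /eqP [<-]|].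
have hX0u : forall x y, x \in X0 -> y \in X0 -> x = y.
  by move=> x y; rewrite !inE => /eqP -> /eqP [].
have hX0e : forall x, ~~ sat M2 x -> exists x0, x0 \in X0.
  move=> x Hx; rewrite /X0; case: (pickP (fun y => ~~ sat M2 y)) => [y Hy|H]; first by exists y; rewrite inE.
  by move: (H x) => /= Hf; rewrite Hf in Hx.
have cX0 : #|X0| <= 1.
  by apply/card_le1_eqP => x y xX yX; apply: hX0u.
pose pend u x : {set W} := [set il u; fa u x].
pose IM1 := [set il @: A | A : {set V1} in M1].
pose IM2 := [set fa p.1 @: p.2 | p : V1 * {set V2} in setX [set: V1] M2].
pose P := [set pend p.1 p.2 | p : V1 * V2 in setX U X0].
pose M := IM1 :|: IM2 :|: P.
have clI : forall (A : {set W}) w, A \in M -> il w \in A ->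
   (exists2 A', A' \in M1 & w \in A' /\ A = il @: A') \/
   (w \in U /\ exists2 x, x \in X0 & A = pend w x).
  move=> A w; rewrite !in_setU => /orP [/orP [] |].
  - case/imsetP => A' A'M -> wA; left; exists A' => //; split => //.
    by rewrite mem_il in wA.
  - by case/imsetP => [[a B]] _ ->; rewrite il_fa.
  - case/imsetP => [[u x]]; rewrite in_setX /= => /andP [uU xX] -> .
    rewrite /pend !inE => /orP [/eqP [eu]|/eqP //]; subst u.
    by right; split; [move: uU; rewrite inE | exists x].
have clF : forall (A : {set W}) a y, A \in M -> fa a y \in A ->
   (exists2 B, B \in M2 & y \in B /\ A = fa a @: B) \/
   (a \in U /\ y \in X0 /\ A = pend a y).
  move=> A a y; rewrite !in_setU => /orP [/orP [] |].
  - by case/imsetP => A' A'M ->; rewrite fa_il.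
  - case/imsetP => [[b B]]; rewrite in_setX /= => /andP [_ BM] ->.
    rewrite mem_fa => /andP [/eqP <- yB]; left; exists B => //.
  - case/imsetP => [[u x]]; rewrite in_setX /= => /andP [uU xX] -> .
    rewrite /pend !inE => /orP [/eqP //|/eqP [ea ey]]; subst u x.
    by right; split; [move: uU; rewrite inE | split => //; move: xX; rewrite inE].
have HM : matching ec M.
  apply/matchingP; split.
    move=> A; rewrite !in_setU => /orP [/orP [] |].
    - case/imsetP => A' A'M ->; case/is_edgeP: (E1 A' A'M) => x [y [exy ->]].
      by apply/is_edgeP; exists (il x), (il y); rewrite imset_2.
    - case/imsetP => [[a B]]; rewrite in_setX /= => /andP [_ BM] ->.
      case/is_edgeP: (E2 B BM) => x [y [exy ->]].
      by apply/is_edgeP; exists (fa a x), (fa a y); rewrite imset_2 /= eqxx.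
    - case/imsetP => [[u x]] _ ->.
      by apply/is_edgeP; exists (il u), (fa u x); rewrite /= eqxx.
  move=> A B [w|[a y]] AM BM vA vB.
  - have nU : forall A', A' \in M1 -> w \in A' -> w \in U -> False.
      move=> A' A'M wA'; rewrite inE => /negP; apply; apply/satP; by exists A'.
    case: (clI A w AM vA) => [[A' A'M [wA' ->]]|[wU [x xX ->]]];
    case: (clI B w BM vB) => [[B' B'M [wB' ->]]|[wU' [x' xX' ->]]].
    + by rewrite (U1 A' B' w).
    + by case: (nU A' A'M wA' wU').
    + by case: (nU B' B'M wB' wU).
    + by rewrite (hX0u x x').
  - have nX : forall B', B' \in M2 -> y \in B' -> y \in X0 -> False.
      move=> B' B'M yB' /hX0 /negP; apply; apply/satP; by exists B'.
    case: (clF A a y AM vA) => [[A' A'M [yA' ->]]|[aU [yX ->]]];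
    case: (clF B a y BM vB) => [[B' B'M [yB' ->]]|[aU' [yX' ->]]] //.
    + by rewrite (U2 A' B' y).
    + by case: (nX A' A'M yA' yX').
    + by case: (nX B' B'M yB' yX).
have sI : forall u, sat M1 u -> sat M (il u).
  move=> u /satP [A' A'M uA']; apply/satP; exists (il @: A'); last by rewrite mem_il.
  by rewrite !in_setU; apply/orP; left; apply/orP; left; apply/imsetP; exists A'.
have sF : forall a x, sat M2 x -> sat M (fa a x).
  move=> a x /satP [B BM xB]; apply/satP; exists (fa a @: B); last by rewrite mem_fa eqxx.
  rewrite !in_setU; apply/orP; left; apply/orP; right; apply/imsetP; exists (a, B) => //.
  by rewrite in_setX inE.
have key : forall u y, sat M (il u) || sat M (fa u y).
  move=> u y; case: (boolP (sat M1 u)) => [/sI -> //|nu].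
  case: (boolP (sat M2 y)) => [/(sF u) ->|ny]; first by rewrite orbT.
  case: (hX0e y ny) => x0 xX; apply/orP; left; apply/satP; exists (pend u x0).
    by rewrite !in_setU; apply/orP; right; apply/imsetP; exists (u, x0); rewrite // in_setX inE nu.
  by rewrite !inE eqxx.
have HMm : maximal_matching ec M.
  apply: maximalP => // [[u|[a x]] [v|[b y]]] /=.
  - by move=> euv; case/orP: (maximal_sat HM1max euv) => /sI ->; rewrite ?orbT.
  - by move=> /eqP <-; apply: key.
  - by move=> /eqP <-; rewrite orbC; apply: key.
  - case/andP => /eqP <- exy; case/orP: (maximal_sat HM2 exy) => /(sF a).
    + by move=> H; rewrite /fa in H; rewrite H.
    + by move=> H; rewrite /fa in H; rewrite H orbT.
apply: (leq_trans (sat_le HMm)).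
have c1 : #|IM1| <= matching_number e1 by rewrite -cM1 leq_imset_card.
have c2 : #|IM2| <= #|V1| * saturation_number e2.
  by rewrite (leq_trans (leq_imset_card _ _)) // cardsX cardsT cM2.
have cU : #|U| = #|V1| - 2 * matching_number e1.
  have -> : U = ~: cover M1 by apply/setP => u; rewrite !inE sat_cover.
  by rewrite cardsCs setCK -cM1 (matching_cover H1 HM1).
have c3 : #|P| <= #|U|.
  rewrite (leq_trans (leq_imset_card _ _)) // cardsX.
  by rewrite -{2}(muln1 #|U|) leq_mul2l cX0 orbT.
have cU12 : #|IM1 :|: IM2| <= #|IM1| + #|IM2| by rewrite cardsU leq_subr.
have cM : #|M| <= #|IM1 :|: IM2| + #|P| by rewrite /M cardsU leq_subr.
apply: (leq_trans cM); rewrite -cU; apply: leq_add; last exact: c3.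
by rewrite addnC; apply: (leq_trans cU12); apply: leq_add.
Qed.


Lemma lower (M : {set {set W}}) : maximal_matching ec M ->
  #|V1| * saturation_number e2 <= #|M|.
Proof.
move=> HMm; have /andP [HM _] := HMm; have /matchingP [E Uq] := HM.
have F1 : forall A a x, A \in M -> fa a x \in A ->
    (exists y, e2 x y /\ A = fa a @: [set x; y]) \/ A = [set il a; fa a x].
  move=> A a x AM; case/is_edgeP: (E A AM) => w1 [w2 [ew ->]].
  rewrite !inE => /orP [] /eqP eq; subst.
  - case: w2 ew => [b|[b y]] /=.
    + by move/eqP => <-; right; rewrite setUC.
    + by case/andP => /eqP <- exy; left; exists y; rewrite imset_2.
  - case: w1 ew => [b|[b y]] /=.
    + by move/eqP => ->; right.
    + case/andP => /eqP -> eyx; left; exists y; rewrite (proj1 H2) eyx; split => //.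
      by rewrite imset_2 setUC.
pose Q a (A : {set W}) := [exists x, fa a x \in A].
have QU : forall A a b, A \in M -> Q a A -> Q b A -> a = b.
  move=> A a b AM /existsP [x xA] /existsP [z zA].
  case: (F1 A a x AM xA) => [[y [_ EA]]|EA]; rewrite EA in zA.
  - by move: zA; rewrite mem_fa => /andP [/eqP].
  - by move: zA; rewrite !inE => /orP [/eqP //|/eqP [->]].
have Hca : forall a, saturation_number e2 <= #|[set A in M | Q a A]|.
  move=> a.
  pose N0 := [set B : {set V2} | fa a @: B \in M].
  have F4 : forall A u, A \in M -> fa a u \in A -> A != [set il a; fa a u] -> sat N0 u.
    move=> A u AM uA nA; case: (F1 A a u AM uA) => [[y [_ EA]]|EA]; last by rewrite EA eqxx in nA.
    by apply/satP; exists [set u; y]; rewrite ?inE -?EA // eqxx.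
  have hS : forall u, sat M (fa a u) -> (exists2 A, A \in M & A = [set il a; fa a u]) \/ sat N0 u.
    move=> u /satP [A AM uA]; case: (eqVneq A [set il a; fa a u]) => [EA|nA].
      by left; exists A.
    by right; apply: (F4 A).
  have HN0 : matching e2 N0.
    apply/matchingP; split.
      move=> B; rewrite inE => BM; case/is_edgeP: (E _ BM) => w1 [w2 [_ EB]].
      have : w1 \in fa a @: B by rewrite EB !inE eqxx.
      case/imsetP => x xB Ew1.
      have xI : fa a x \in fa a @: B by rewrite mem_fa eqxx.
      case: (F1 _ a x BM xI) => [[y [exy EB']]|EB'].
        by rewrite (imset_inj (@fa_inj a) EB'); apply/is_edgeP; exists x, y.
      by have := il_fa a a B; rewrite EB' !inE eqxx.
    move=> B B' x; rewrite !inE => BM B'M xB xB'.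
    apply: (imset_inj (@fa_inj a)); apply: (Uq _ _ (fa a x) BM B'M); by rewrite mem_fa eqxx.
  have ne : forall B, B \in N0 -> exists x, x \in B.
    move=> B BN; have /matchingP [EN _] := HN0.
    by case/is_edgeP: (EN B BN) => x [y [_ ->]]; exists x; rewrite !inE eqxx.
  pose IM := [set fa a @: B | B : {set V2} in N0].
  have cIM : #|IM| = #|N0| by rewrite card_imset //; apply: imset_inj; apply: fa_inj.
  have sIM : IM \subset [set A in M | Q a A].
    apply/subsetP => A /imsetP [B BN ->]; rewrite inE; apply/andP; split; first by rewrite inE in BN.
    by case: (ne B BN) => x xB; apply/existsP; exists x; rewrite mem_fa eqxx.
  have edge_e : forall u v, e2 u v -> sat M (fa a u) || sat M (fa a v).
    by move=> u v euv; apply: (maximal_sat HMm); rewrite /= eqxx.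
  case: (boolP [exists x0, [set il a; fa a x0] \in M]).
  - case/existsP => x0 PM.
    have noP : forall u, u != x0 -> (exists2 A, A \in M & A = [set il a; fa a u]) -> False.
      move=> u ux [A AM EA].
      have : A = [set il a; fa a x0] by apply: (Uq _ _ (il a) AM PM); rewrite ?EA !inE eqxx.
      move=> EA'; have : fa a u \in A by rewrite EA !inE eqxx orbT.
      by rewrite EA' !inE => /orP [/eqP //|/eqP [] /eqP]; rewrite (negbTE ux).
    have hyp : forall u v, e2 u v -> u != x0 -> v != x0 -> sat N0 u || sat N0 v.
      move=> u v euv ux vx; case/orP: (edge_e u v euv) => /hS [].
      + by move/(noP u ux).
      + by move=> ->.
      + by move/(noP v vx).
      + by move=> ->; rewrite orbT.
    case: (extend_one H2 HN0 hyp) => N HN cN.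
    apply: (leq_trans (sat_le HN)); apply: (leq_trans cN).
    have nP : [set il a; fa a x0] \notin IM.
      apply/negP => /imsetP [B _ EB]; have := il_fa a a B.
      by rewrite -EB !inE eqxx.
    have -> : #|N0| + 1 = #|[set il a; fa a x0] |: IM| by rewrite cardsU1 nP cIM addnC.
    apply: subset_leq_card; rewrite subUset sIM andbT sub1set inE PM /=.
    by apply/existsP; exists x0; rewrite !inE eqxx orbT.
  - move=> nex.
    have noP : forall u, (exists2 A, A \in M & A = [set il a; fa a u]) -> False.
      move=> u [A AM EA]; move/negP: nex; apply; apply/existsP; exists u; by rewrite -EA.
    have HN0m : maximal_matching e2 N0.
      apply: maximalP => // u v euv; case/orP: (edge_e u v euv) => /hS [].
      + by move/noP.
      + by move=> ->.
      + by move/noP.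
      + by move=> ->; rewrite orbT.
    apply: (leq_trans (sat_le HN0m)); rewrite -cIM; exact: subset_leq_card.
have cardQ : forall a, #|[set A in M | Q a A]| = \sum_(A in M) (Q a A : nat).
  move=> a; rewrite -sum1_card big_mkcond [RHS]big_mkcond; apply: eq_bigr => A _.
  by rewrite !inE; case: (A \in M); case: (Q a A).
have cardA : forall A, A \in M -> \sum_(a in [set: V1]) (Q a A : nat) <= 1.
  move=> A AM; have -> : \sum_(a in [set: V1]) (Q a A : nat) = #|[set a | Q a A]|.
    rewrite -sum1_card big_mkcond [RHS]big_mkcond; apply: eq_bigr => a _.
    by rewrite !inE; case: (Q a A).
  by apply/card_le1_eqP => a b; rewrite !inE => Qa Qb; apply: (QU A).
rewrite -cardsT -sum_nat_const.
apply: (@leq_trans (\sum_(a in [set: V1]) #|[set A in M | Q a A]|)).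
  by apply: leq_sum => a _; apply: Hca.
under eq_bigr => a _ do rewrite cardQ.
rewrite exchange_big /= -sum1_card; apply: leq_sum => A AM; exact: cardA.
Qed.

End Cor.

Theorem corollary2p9 (V1 V2 : finType) (e1 : rel V1) (e2 : rel V2) :
  simple_graph e1 -> simple_graph e2 ->
  let n := #|V1| in
  let a := matching_number e1 in
  let l := n - 2 * a in
  n * saturation_number e2 <= saturation_number (corona e1 e2) /\
  saturation_number (corona e1 e2) <= n * saturation_number e2 + a + l.
Proof.
move=> H1 H2 n a l; rewrite /l /a /n; split.
  case: (sat_attained (corona_simple H1 H2)) => M HM <-.
  exact: (lower H2 HM).
exact: (upper H1 H2).
Qed.
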